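(* Let $j\in\mathbb Z_{\ge1}$. Then $$\sum_{m=0}^{j} i(i-1)\cdots(i-m+1)\,\frac{2^{2m}}{(2m)!}\,\frac{1}{(j-m)!}=0$$ for every $i=-l-\frac12$ with $l\in\{0,1,\dots,j-1\}$ (the product $i(i-1)\cdots(i-m+1)$ being $1$ for $m=0$). *)

(* Defs.v *)
From mathcomp Require Import all_boot all_algebra.
Set Implicit Arguments. Unset Strict Implicit. Unset Printing Implicit Defensive.
Import GRing.Theory Num.Theory.
Local Open Scope ring_scope.

Definition falling {R : ringType} (x : R) (m : nat) : R :=
  \prod_(k < m) (x - k%:R).

(* Main.v *)
Require Import Defs.
From mathcomp Require Import all_boot all_algebra.
From mathcomp Require Import ring lra zify.
Import GRing.Theory Num.Theory.
Local Open Scope ring_scope.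

Lemma sumS (f : nat -> rat) j :
  \sum_(0 <= m < j.+2) (-1)^+m * ('C(j.+1,m))%:R * f m =
  \sum_(0 <= m < j.+1) (-1)^+m * ('C(j,m))%:R * (f m - f m.+1).
Proof.
rewrite big_nat_recl //=.
have E1 : \sum_(0 <= m < j.+1) (-1)^+m * ('C(j,m))%:R * f m =
   f 0%N - \sum_(0 <= m < j.+1) (-1)^+m * ('C(j,m.+1))%:R * f m.+1.
  rewrite big_nat_recl // big_nat_recr //= (bin_small (ltnSn j)) mulr0 mul0r addr0.
  rewrite bin0 expr0 mul1r mul1r -sumrN; congr (_ + _); apply: eq_bigr => m _.
  by rewrite exprS; ring.
have E2 : \sum_(0 <= m < j.+1) (-1)^+m * ('C(j,m))%:R * (f m - f m.+1) =
  \sum_(0 <= m < j.+1) (-1)^+m * ('C(j,m))%:R * f m -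
  \sum_(0 <= m < j.+1) (-1)^+m * ('C(j,m))%:R * f m.+1.
  by rewrite -sumrB; apply: eq_bigr => m _; ring.
rewrite E2 E1 bin0 expr0 !mul1r.
have E3 : \sum_(0 <= i < j.+1) (-1) ^+ i.+1 * ('C(j.+1, i.+1))%:R * f i.+1 =
  - \sum_(0 <= m < j.+1) (-1)^+m * ('C(j,m.+1))%:R * f m.+1
  - \sum_(0 <= m < j.+1) (-1)^+m * ('C(j,m))%:R * f m.+1.
  rewrite -!sumrN -big_split; apply: eq_bigr => m _.
  rewrite /= binS natrD exprS; ring.
rewrite E3; ring.
Qed.

Definition P (l n : nat) : nat := \prod_(t < l) (2 * n + 2 * t + 1)%N.

Lemma PS (l n : nat) : P l.+1 n = ((2 * n+1) * P l n.+1)%N.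
Proof.
rewrite /P big_ord_recl /= muln0 addn0; congr (_ * _)%N; apply: eq_bigr => t _.
rewrite /bump /=; lia.
Qed.

Lemma PSr (l n : nat) : P l.+1 n = (P l n * (2 * n+2 * l+1))%N.
Proof. by rewrite /P big_ord_recr. Qed.

Lemma key j : forall l s, (l < j)%N ->
  \sum_(0 <= m < j.+1) (-1)^+m * ('C(j,m))%:R * ((P l (m + s))%:R : rat) = 0.
Proof.
elim: j => [//|j IH] [|l] s hl.
  rewrite sumS big1 // => m _; by rewrite /P !big_ord0 subrr mulr0.
rewrite sumS.
rewrite (eq_bigr (fun m => (- (2 * l.+1)%:R) *
   ((-1)^+m * ('C(j,m))%:R * ((P l (m + s.+1))%:R : rat)))); last first.
  move=> m _; rewrite PS PSr addSn (_ : (m + s.+1 = (m+s).+1)%N); last by lia.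
  set Q := P l (m + s).+1.
  have H : ((2 * (m + s) + 1) * Q + 2 * l.+1 * Q = Q * (2 * (m + s).+1 + 2 * l + 1))%N.
    nia.
  rewrite -H natrD !natrM; ring.
by rewrite -mulr_sumr IH ?mulr0.
Qed.

Definition D (m : nat) : nat := \prod_(k < m) (2 * k+1)%N.

Lemma D_gt0 m : (0 < D m)%N.
Proof. by rewrite /D prodn_gt0 // => k; rewrite addn1. Qed.

Lemma fact2 m : (2 * m)`! = (2 ^ m * m`! * D m)%N.
Proof.
elim: m => [|m IH]; first by rewrite /D big_ord0.
have -> : (2 * m.+1 = (2 * m).+2)%N by lia.
rewrite !factS IH /D big_ord_recr /= expnS.
set A := \prod_(i < m) _; nia.
Qed.

Lemma Dsplit a b : D (a + b) = (D a * \prod_(k < b) (2 * a + 2 * k + 1))%N.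
Proof.
rewrite /D big_split_ord /=; congr (_ * _)%N; apply: eq_bigr => k _ /=; lia.
Qed.

Lemma QP l m : ((\prod_(k < m) (2 * l + 2 * k + 1)) * D l = P l m * D m)%N.
Proof. by rewrite mulnC -Dsplit addnC Dsplit mulnC. Qed.

Lemma fallingE (l m : nat) :
  falling (- (l%:R) - 1 / 2%:R : rat) m * 2%:R ^+ m =
  (-1) ^+ m * (\prod_(k < m) (2 * l + 2 * k + 1))%N%:R.
Proof.
elim: m => [|m IH]; first by rewrite /falling !big_ord0 !mul1r.
set i := (- (l%:R) - 1 / 2%:R : rat).
transitivity ((falling i m * 2%:R ^+ m) * (2%:R * (i - m%:R))).
  by rewrite /falling big_ord_recr /= exprS; ring.
rewrite IH /i big_ord_recr /= natrM.
rewrite (_ : (2 * l + 2 * m + 1)%:R = 2%:R * l%:R + 2%:R * m%:R + 1 :> rat); last by rewrite !natrD; ring.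
by rewrite exprS; field.
Qed.

Theorem lemma3p12 (j : nat) (hj : (1 <= j)%N) (l : nat) (hl : (l < j)%N) :
  let i : rat := - (l%:R) - 1 / 2%:R in
  \sum_(0 <= m < j.+1)
     falling i m * (2%:R ^+ (2 * m) / ((2 * m)`!)%:R) / ((j - m)`!)%:R = 0.
Proof.
move=> i.
rewrite (@eq_big_nat _ _ _ 0 j.+1 _ (fun m => ((j`!)%:R * (D l)%:R)^-1 *
   ((-1)^+m * ('C(j,m))%:R * ((P l (m + 0))%:R : rat)))); last first.
  move=> m /andP[_ hm]; rewrite ltnS in hm.
  set Q := (\prod_(k < m) (2 * l + 2 * k + 1))%N.
  have hF : falling i m = (-1) ^+ m * Q%:R / 2%:R ^+ m.
    rewrite -fallingE; field; by rewrite expf_neq0.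
  have hP : (P l m)%:R = (Q%:R * (D l)%:R) / (D m)%:R :> rat.
    rewrite -natrM QP natrM; field; by rewrite pnatr_eq0 -lt0n D_gt0.
  have hj' : (j`!)%:R = ('C(j,m))%:R * (m`!)%:R * ((j - m)`!)%:R :> rat.
    by rewrite -!natrM -mulnA bin_fact.
  rewrite addn0 hF hP hj' fact2 mulnC exprM !natrM natrX.
  have h1 : (D m)%:R != 0 :> rat by rewrite pnatr_eq0 -lt0n D_gt0.
  have h2 : (D l)%:R != 0 :> rat by rewrite pnatr_eq0 -lt0n D_gt0.
  have h3 : (m`!)%:R != 0 :> rat by rewrite pnatr_eq0 -lt0n fact_gt0.
  have h4 : ((j-m)`!)%:R != 0 :> rat by rewrite pnatr_eq0 -lt0n fact_gt0.
  have h5 : ('C(j,m))%:R != 0 :> rat by rewrite pnatr_eq0 -lt0n bin_gt0.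
  have h6 : (2%:R ^+ m) != 0 :> rat by rewrite expf_neq0.
  set t := (2%:R ^+ m : rat).
  field; rewrite ?h1 ?h2 ?h3 ?h4 ?h5 ?h6 //.
rewrite -big_distrr /=.
by rewrite key // mulr0.
Qed.
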